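(* Let $\mathcal{X}\subset\mathbb{R}^d$ be a full-dimensional polytope with vertex set $\mathcal{V}$, let ${\bm{u}}\in\mathbb{R}^d$, and let $B,B'\subseteq\mathcal{V}$ be affine bases of $\mathcal{X}$ (sets of $d+1$ affinely independent points) such that $B$ is an optimal spanning set of ${\bm{u}}$. Then ${\bm{v}}(B)\ge{\bm{v}}(B')$ coordinatewise.
   Context: For ${\bm{u}}\in\mathbb{R}^d$ write ${\bm{x}}\succeq{\bm{x}}'$ if $\langle{\bm{u}},{\bm{x}}\rangle\ge\langle{\bm{u}},{\bm{x}}'\rangle$, and $B_{\succeq{\bm{x}}}=\{{\bm{x}}'\in B:\langle{\bm{u}},{\bm{x}}'-{\bm{x}}\rangle\ge0\}$. A finite $B\subseteq\mathcal{X}$ is an optimal spanning set of ${\bm{u}}$ if every vertex ${\bm{x}}\in\mathcal{V}$ lies in the affine hull of $B_{\succeq{\bm{x}}}$. For $B=\{{\bm{x}}_0,\dots,{\bm{x}}_d\}$ with ${\bm{x}}_0\succeq\dots\succeq{\bm{x}}_d$, define ${\bm{v}}(B)=(\langle{\bm{u}},{\bm{x}}_0\rangle,\dots,\langle{\bm{u}},{\bm{x}}_d\rangle)\in\mathbb{R}^{d+1}$. *)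

(* Defs.v *)
From mathcomp Require Import all_boot all_order all_algebra.
Set Implicit Arguments. Unset Strict Implicit. Unset Printing Implicit Defensive.
Import Order.TTheory GRing.Theory Num.Theory.
Local Open Scope ring_scope.

Section Defs.
Variables (R : realFieldType) (d : nat).
Notation pt := 'rV[R]_d.

Definition dotp (u x : pt) : R := \sum_(i < d) u ord0 i * x ord0 i.

Definition in_conv (S : seq pt) (x : pt) : Prop :=
  exists l : 'I_(size S) -> R,
    [/\ forall i, 0 <= l i, \sum_i l i = 1 & x = \sum_i l i *: S`_i].

Definition in_aff (S : seq pt) (x : pt) : Prop :=
  exists l : 'I_(size S) -> R, \sum_i l i = 1 /\ x = \sum_i l i *: S`_i.

Definition aff_indep (S : seq pt) : Prop :=
  forall l : 'I_(size S) -> R,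
    \sum_i l i = 0 -> \sum_i l i *: S`_i = 0 -> forall i, l i = 0.

Definition polytope (X : pt -> Prop) : Prop :=
  exists S : seq pt, forall x, X x <-> in_conv S x.

Definition full_dim (X : pt -> Prop) : Prop :=
  exists p : seq pt, [/\ size p = d.+1, aff_indep p & forall y, y \in p -> X y].

Definition is_vertex (X : pt -> Prop) (x : pt) : Prop :=
  X x /\ exists c : pt, forall y, X y -> y <> x -> dotp c y < dotp c x.

Definition affine_basis (X : pt -> Prop) (B : seq pt) : Prop :=
  [/\ size B = d.+1, aff_indep B & forall y, y \in B -> X y].

Definition upper_set (u : pt) (B : seq pt) (x : pt) : seq pt :=
  [seq y <- B | 0 <= dotp u (y - x)].

Definition optimal_spanning (X : pt -> Prop) (u : pt) (B : seq pt) : Prop :=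
  (forall y, y \in B -> X y) /\
  forall x, is_vertex X x -> in_aff (upper_set u B x) x.

Definition vvec (u : pt) (B : seq pt) : seq R :=
  sort (fun a b => b <= a) [seq dotp u x | x <- B].

End Defs.

(* Main.v *)
Require Import Defs.
From mathcomp Require Import all_boot all_order all_algebra.
From mathcomp Require Import zify.
Set Implicit Arguments. Unset Strict Implicit. Unset Printing Implicit Defensive.
Import Order.TTheory GRing.Theory Num.Theory.
Local Open Scope ring_scope.

Section Aux.
Variables (R : realFieldType) (d : nat).
Notation pt := 'rV[R]_d.

Definition hat (x : pt) : 'rV[R]_(1 + d) := row_mx (const_mx 1) x.
Definition Mx (S : seq pt) : 'M[R]_(size S, 1 + d) := \matrix_(i < size S) hat S`_i.

Lemma row_Mx S (i : 'I_(size S)) : row i (Mx S) = hat S`_i.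
Proof. by rewrite rowK. Qed.

Lemma mem_Mx S y : y \in S -> (hat y <= Mx S)%MS.
Proof.
move=> yS; have hi : (index y S < size S)%N by rewrite index_mem.
rewrite -(nth_index 0 yS) -[index y S]/(nat_of_ord (Ordinal hi)) -row_Mx.
exact: row_sub.
Qed.

Lemma sub_Mx S S' : {subset S <= S'} -> (Mx S <= Mx S')%MS.
Proof.
move=> sub; apply/row_subP => i; rewrite row_Mx; apply: mem_Mx; apply: sub.
exact: mem_nth.
Qed.

Lemma sum_hat n (l : 'I_n -> R) (F : 'I_n -> pt) :
  \sum_j l j *: hat (F j) = row_mx (const_mx (\sum_j l j)) (\sum_j l j *: F j).
Proof.
apply/rowP => k; rewrite summxE.
case: (splitP k) => j hk.
  have -> : k = lshift d j by apply: val_inj.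
  rewrite row_mxEl mxE; apply: eq_bigr => i _.
  by rewrite [LHS]mxE /hat row_mxEl mxE mulr1.
have -> : k = rshift 1 j by apply: val_inj.
rewrite row_mxEr summxE; apply: eq_bigr => i _.
by rewrite [LHS]mxE /hat row_mxEr mxE.
Qed.

Lemma aff_Mx S x : in_aff S x -> (hat x <= Mx S)%MS.
Proof.
case=> l [s1 ->].
have -> : hat (\sum_i l i *: S`_i) = \sum_i l i *: hat S`_i by rewrite sum_hat s1.
apply: summx_sub => i _; apply: scalemx_sub; rewrite -row_Mx; exact: row_sub.
Qed.

Lemma indep_free S : aff_indep S -> row_free (Mx S).
Proof.
move=> ind; rewrite -kermx_eq0; apply/eqP/row_matrixP => r; rewrite row0.
set v := row r (kermx (Mx S)).
have hv : v *m Mx S = 0 by rewrite /v -row_mul mulmx_ker row0.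
have key k : (v *m Mx S) 0 k = \sum_j v 0 j * hat S`_j 0 k.
  by rewrite mxE; apply: eq_bigr => j _; rewrite /Mx [X in _ * X]mxE.
pose l j := v 0 j.
have s0 : \sum_j l j = 0.
  have := key (lshift d 0); rewrite hv mxE => /esym H; apply: etrans _ H.
  by apply: eq_bigr => j _; rewrite /hat row_mxEl [const_mx _ _ _]mxE mulr1.
have s1 : \sum_j l j *: S`_j = 0.
  apply/rowP => k; rewrite summxE mxE.
  have := key (rshift 1 k); rewrite hv mxE => /esym H; apply: etrans _ H.
  by apply: eq_bigr => j _; rewrite /hat row_mxEr [LHS]mxE.
by apply/rowP => j; rewrite [RHS]mxE; exact: (ind l s0 s1 j).
Qed.

Lemma dotp_sub (u z y : pt) : dotp u (z - y) = dotp u z - dotp u y.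
Proof. by rewrite /dotp -sumrB; apply: eq_bigr => k _; rewrite !mxE mulrBr. Qed.

End Aux.

Definition ge (R : realFieldType) := fun a b : R => b <= a.

Lemma ge_sorted_nth (R : realFieldType) (s : seq R) i j :
  sorted (@ge R) s -> (i <= j)%N -> (j < size s)%N -> s`_j <= s`_i.
Proof.
move=> ss hij hj.
apply: (sorted_leq_nth (leT := @ge R) _ _ 0 ss) => //.
- by move=> a b c; rewrite /ge => h1 h2; exact: le_trans h2 h1.
- by move=> a; rewrite /ge.
- by rewrite inE; apply: leq_ltn_trans hj.
Qed.

Lemma count_gt (R : realFieldType) (s : seq R) i :
  sorted (@ge R) s -> (i < size s)%N -> (count (fun a => (s`_i < a)%R) s <= i)%N.
Proof.
move=> ss hi; rewrite -[X in count _ X](cat_take_drop i s) count_cat.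
have -> : count (fun a => (s`_i < a)%R) (drop i s) = 0%N.
  apply/eqP; rewrite -leqn0 leqNgt -has_count; apply/hasPn => a /(nthP (0:R)) [j hj <-].
  rewrite nth_drop -leNgt; apply: ge_sorted_nth => //; first exact: leq_addr.
  by rewrite size_drop ltn_subRL in hj.
rewrite addn0; apply: leq_trans (count_size _ _) _; rewrite size_take.
by rewrite hi.
Qed.

Lemma count_gt2 (R : realFieldType) (s : seq R) i c :
  sorted (@ge R) s -> (i < size s)%N -> c < s`_i ->
  (i < count (fun a => (c < a)%R) s)%N.
Proof.
move=> ss hi hc; rewrite -[X in count _ X](cat_take_drop i.+1 s) count_cat.
have -> : count (fun a => (c < a)%R) (take i.+1 s) = i.+1.
  apply/eqP; rewrite -[X in _ == X](@size_takel i.+1 _ s) // -all_count.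
  apply/allP => a /(nthP (0:R)) [j hj <-]; rewrite nth_take.
    by apply: lt_le_trans hc _; apply: ge_sorted_nth => //; move: hj; rewrite size_takel.
  by move: hj; rewrite size_takel.
exact: leq_addr.
Qed.

Theorem mainTheorem12 (R : realFieldType) (d : nat) (X : 'rV[R]_d -> Prop)
  (u : 'rV[R]_d) (B B' : seq 'rV[R]_d) :
  polytope X -> full_dim X ->
  affine_basis X B -> affine_basis X B' ->
  (forall x, x \in B -> is_vertex X x) ->
  (forall x, x \in B' -> is_vertex X x) ->
  optimal_spanning X u B ->
  forall i : 'I_d.+1, nth 0 (vvec u B') i <= nth 0 (vvec u B) i.
Proof.
move=> _ _ [szB indB inB] [szB' indB' inB'] _ vB' [_ opt] i.
set f := dotp u; set s := vvec u B; set s' := vvec u B'.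
rewrite leNgt; apply/negP => hlt.
set c := s`_i.
have tot : total (@ge R) by move=> a b; rewrite /ge le_total.
have ss : sorted (@ge R) s by exact: sort_sorted.
have ss' : sorted (@ge R) s' by exact: sort_sorted.
have sz : size s = d.+1 by rewrite size_sort size_map.
have sz' : size s' = d.+1 by rewrite size_sort size_map.
have hT : (count (fun y => (c < f y)%R) B <= i)%N.
  rewrite -(count_map f (fun a => (c < a)%R)).
  rewrite -((permP (permEl (perm_sort (@ge R) _))) (fun a => (c < a)%R)).
  by apply: count_gt => //; rewrite sz.
have hT' : (i < count (fun y => (c < f y)%R) B')%N.
  rewrite -(count_map f (fun a => (c < a)%R)).
  rewrite -((permP (permEl (perm_sort (@ge R) _))) (fun a => (c < a)%R)).
  by apply: count_gt2 => //; rewrite sz'.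
pose T := [seq y <- B | c < f y].
pose L := [seq y <- B' | ~~ (c < f y)].
have sub : (Mx B' <= Mx T + Mx L)%MS.
  apply/row_subP => j; rewrite row_Mx.
  have yB' : B'`_j \in B' by exact: mem_nth.
  case: (boolP (c < f B'`_j)) => h.
    apply: submx_trans (addsmxSl _ _).
    apply: submx_trans (aff_Mx (opt _ (vB' _ yB'))) _.
    apply: sub_Mx => z; rewrite mem_filter => /andP [hz zB].
    rewrite mem_filter zB andbT.
    rewrite dotp_sub subr_ge0 in hz; exact: lt_le_trans h hz.
  apply: submx_trans (addsmxSr _ _); apply: mem_Mx.
  by rewrite mem_filter h.
have := mxrankS sub; rewrite (eqP (indep_free indB')).
have h1 := (mxrank_adds_leqif (Mx T) (Mx L)).1.
have h2 := rank_leq_row (Mx T).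
have h3 := rank_leq_row (Mx L).
have h4 : size T = count (fun y => (c < f y)%R) B by rewrite size_filter.
have h5 : (size L + count (fun y => (c < f y)%R) B')%N = size B'.
  by rewrite size_filter addnC count_predC.
lia.
Qed.
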